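(* Let $\tau\ge1$ and $\mathcal C$ a finite set of candidates. Form the pairwise majority graph on $\mathcal C$ in which each pairwise winner is determined by Weighted Majority Rule 3. Then every candidate in the uncovered set of this graph has distortion at most $\max\{(\frac{\tau+2}{\tau})^2,\tau^2\}$.
   Context: Voters $N=\{1,\dots,n\}$ and candidates $\mathcal C$ are points of an arbitrary metric space $(X,d)$. $SC(Y)=\sum_{i\in N}d(i,Y)$; distortion of $P$ is $SC(P)/\min_{Z\in\mathcal C}SC(Z)$. For a pair $P,Q$, Weighted Majority Rule 3 counts $|A|$, the number of voters with $d(i,Q)/d(i,P)\ge\tau$, and $|B|$, the number with $d(j,P)/d(j,Q)\ge\tau$, and declares $P$ the winner if $|A|\ge|B|$, else $Q$ (other voters are ignored). A candidate $P$ is in the uncovered set if for every other candidate $Z$, either $P$ beats $Z$, or there is a candidate $Q$ such that $P$ beats $Q$ and $Q$ beats $Z$. *)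

(* Defs.v *)
From Stdlib Require Import Reals List.
Import ListNotations.
Open Scope R_scope.

Definition is_metric {X : Type} (d : X -> X -> R) : Prop :=
  (forall x y, 0 <= d x y) /\
  (forall x y, d x y = 0 <-> x = y) /\
  (forall x y, d x y = d y x) /\
  (forall x y z, d x z <= d x y + d y z).

Definition SC {X : Type} (d : X -> X -> R) (voters : list X) (Y : X) : R :=
  fold_right (fun i acc => d i Y + acc) 0 voters.

(* |A| : number of voters i with d(i,Q)/d(i,P) >= tau, i.e. d(i,Q) >= tau * d(i,P). *)
Definition countA {X : Type} (d : X -> X -> R) (tau : R) (voters : list X) (P Q : X) : nat :=
  length (filter (fun i => if Rle_dec (tau * d i P) (d i Q) then true else false) voters).

(* Weighted Majority Rule 3: P beats Q iff |A| >= |B|, where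
   |B| = number of voters j with d(j,P)/d(j,Q) >= tau = countA with roles swapped. *)
Definition wmr3_beats {X : Type} (d : X -> X -> R) (tau : R) (voters : list X) (P Q : X) : Prop :=
  (countA d tau voters Q P <= countA d tau voters P Q)%nat.

Definition uncovered {X : Type} (d : X -> X -> R) (tau : R) (voters : list X) (C : list X) (P : X) : Prop :=
  In P C /\
  forall Z, In Z C -> Z <> P ->
    wmr3_beats d tau voters P Z \/
    exists Q, In Q C /\ wmr3_beats d tau voters P Q /\ wmr3_beats d tau voters Q Z.

(* Main.v *)
Require Import Defs.
From Stdlib Require Import Reals List Lra Psatz Classical.
Open Scope R_scope.

Lemma voter_ineq (tau c x z D : R) :
  1 <= tau -> c * tau >= tau + 2 -> c >= tau -> 0 <= x -> 0 <= z -> 0 <= D ->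
  D <= x + z -> x <= z + D ->
  x <= c * z + D * ((if Rle_dec (tau * z) x then 1 else 0) -
                    (if Rle_dec (tau * x) z then 1 else 0)).
Proof.
  intros Ht Hc1 Hc2 Hx Hz HD T1 T2.
  destruct (Rle_dec (tau * z) x) as [H1|H1]; destruct (Rle_dec (tau * x) z) as [H2|H2].
  - nra.
  - assert (c >= 1) by lra. nra.
  - assert (tau * (2*x + z) <= c * tau * z) by nra.
    assert (2*x + z <= c * z) by nra. nra.
  - nra.
Qed.

Lemma SC_nonneg {X : Type} (d : X -> X -> R) vs Y : is_metric d -> 0 <= SC d vs Y.
Proof.
  intros [H0 _]. induction vs; simpl; [lra|]. specialize (H0 a Y). lra.
Qed.

Lemma sum_bound {X : Type} (d : X -> X -> R) tau c vs P Z :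
  is_metric d -> 1 <= tau -> c * tau >= tau + 2 -> c >= tau ->
  SC d vs P <= c * SC d vs Z +
    d P Z * (INR (countA d tau vs Z P) - INR (countA d tau vs P Z)).
Proof.
  intros Hm Ht Hc1 Hc2. destruct Hm as (H0 & Hid & Hsym & Htri).
  induction vs as [|i vs IH].
  - unfold SC, countA; simpl. lra.
  - unfold SC, countA in *; simpl.
    assert (Hv := voter_ineq tau c (d i P) (d i Z) (d P Z) Ht Hc1 Hc2 (H0 _ _) (H0 _ _) (H0 _ _)).
    assert (d P Z <= d i P + d i Z) by (rewrite (Hsym i P); apply Htri).
    assert (d i P <= d i Z + d P Z) by (rewrite (Hsym P Z); apply Htri).
    specialize (Hv H H1).
    destruct (Rle_dec (tau * d i Z) (d i P)); destruct (Rle_dec (tau * d i P) (d i Z));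
    simpl length; rewrite ?S_INR; lra.
Qed.

Lemma beats_bound {X : Type} (d : X -> X -> R) tau c vs P Z :
  is_metric d -> 1 <= tau -> c * tau >= tau + 2 -> c >= tau ->
  wmr3_beats d tau vs P Z -> SC d vs P <= c * SC d vs Z.
Proof.
  intros Hm Ht Hc1 Hc2 Hb.
  pose proof (sum_bound d tau c vs P Z Hm Ht Hc1 Hc2).
  unfold wmr3_beats in Hb. apply le_INR in Hb.
  assert (0 <= d P Z) by (destruct Hm as [H0 _]; apply H0).
  nra.
Qed.

Theorem mainTheorem8 (X : Type) (d : X -> X -> R) (voters : list X) (C : list X) (tau : R) :
  is_metric d -> 1 <= tau ->
  forall P, uncovered d tau voters C P ->
  forall Z, In Z C ->
    SC d voters P <= Rmax (((tau + 2) / tau) ^ 2) (tau ^ 2) * SC d voters Z.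
Proof.
  intros Hm Ht P [HP Hunc] Z HZ.
  set (c := Rmax ((tau + 2) / tau) tau).
  assert (Hc2 : c >= tau) by (apply Rle_ge, Rmax_r).
  assert (Hc1 : c * tau >= tau + 2).
  { assert ((tau + 2) / tau <= c) by apply Rmax_l.
    assert ((tau + 2) / tau * tau = tau + 2) by (field; lra). nra. }
  assert (Hcsq : c ^ 2 <= Rmax (((tau + 2) / tau) ^ 2) (tau ^ 2)).
  { unfold c, Rmax at 1. destruct (Rle_dec ((tau + 2) / tau) tau).
    - apply Rmax_r. - apply Rmax_l. }
  assert (HM1 : c <= c ^ 2) by nra.
  pose proof (SC_nonneg d voters Z Hm) as HZ0.
  pose proof (SC_nonneg d voters P Hm) as HP0.
  assert (Hmain : SC d voters P <= c ^ 2 * SC d voters Z).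
  { destruct (classic (Z = P)) as [->|Hne].
    - nra.
    - destruct (Hunc Z HZ Hne) as [Hb | (Q & HQ & H1 & H2)].
      + pose proof (beats_bound d tau c voters P Z Hm Ht Hc1 Hc2 Hb). nra.
      + pose proof (beats_bound d tau c voters P Q Hm Ht Hc1 Hc2 H1).
        pose proof (beats_bound d tau c voters Q Z Hm Ht Hc1 Hc2 H2). nra. }
  nra.
Qed.
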